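(* Let $G=(V,E)$ be a bispanning graph with $|V|\ge 3$. (i) If $G$ contains a pair of parallel edges, then $G$ is composite. (ii) If $G$ is atomic, then $G$ is simple. (iii) If $G$ contains a cut-vertex (vertex-connectivity $1$), then $G$ is composite. (iv) If $G$ has edge-connectivity $2$, then $G$ is composite. (v) If $G$ contains a vertex of degree $2$, then $G$ is composite.
   Context: Graphs are finite, undirected, may have parallel edges, no loops; simple means no parallel edges. A spanning tree of $G$ is $T\subseteq E$ with $(V,T)$ connected and acyclic; $G$ is bispanning if $E$ is the union of two disjoint spanning trees. A bispanning graph $G$ is composite if it contains a subgraph which is bispanning and is neither $G$ itself nor a single vertex; otherwise it is atomic. A cut-vertex is a vertex whose deletion increases the number of connected components. Edge-connectivity is the largest $k$ such that $|E|>k$ and deleting fewer than $k$ edges leaves $G$ connected. *)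

(* Defs.v *)
(* Finite multigraphs: vertex type V, edge type E (both finite),
   each edge e has endpoints src e and dst e (loopless: src e != dst e). *)
From mathcomp Require Import all_boot.
Set Implicit Arguments. Unset Strict Implicit. Unset Printing Implicit Defensive.

Section MultiGraph.
Variables (V E : finType) (src dst : E -> V).

Definition joins (e : E) (x y : V) : bool :=
  ((src e == x) && (dst e == y)) || ((src e == y) && (dst e == x)).

Definition adj (F : {set E}) : rel V := fun x y => [exists e in F, joins e x y].

Definition conn (F : {set E}) (x y : V) : bool := connect (adj F) x y.

Definition subgraph (S : {set V}) (F : {set E}) : Prop :=
  forall e, e \in F -> (src e \in S) && (dst e \in S).

Definition connected_on (S : {set V}) (T : {set E}) : Prop :=
  forall x y, x \in S -> y \in S -> conn T x y.

(* T is acyclic: no edge of T lies on a cycle of T, i.e. the endpoints of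
   each edge e of T are not connected in T minus e *)
Definition acyclic (T : {set E}) : Prop :=
  forall e, e \in T -> ~~ conn (T :\ e) (src e) (dst e).

Definition spanning_tree (S : {set V}) (F : {set E}) (T : {set E}) : Prop :=
  T \subset F /\ connected_on S T /\ acyclic T.

Definition bispanning (S : {set V}) (F : {set E}) : Prop :=
  exists T1 T2 : {set E},
    [/\ spanning_tree S F T1, spanning_tree S F T2,
        T1 :&: T2 = set0 & T1 :|: T2 = F].

Definition bispanningG : Prop := bispanning [set: V] [set: E].

(* G is composite: bispanning and has a bispanning subgraph which is neither
   G itself nor a single vertex (subgraphs have nonempty vertex sets) *)
Definition composite : Prop :=
  bispanningG /\
  exists (S : {set V}) (F : {set E}),
    [/\ subgraph S F, bispanning S F,
        ~ (S = [set: V] /\ F = [set: E]) & 1 < #|S|].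

Definition atomic : Prop := bispanningG /\ ~ composite.

Definition has_parallel_edges : Prop :=
  exists e1 e2 : E, e1 != e2 /\ joins e2 (src e1) (dst e1).

Definition simple : Prop := ~ has_parallel_edges.

Definition ncomp (S : {set V}) (F : {set E}) : nat :=
  #|[set [set y in S | conn F x y] | x in S]|.

Definition avoid (v : V) : {set E} := [set e | (src e != v) && (dst e != v)].

Definition cut_vertex (v : V) : Prop :=
  ncomp [set: V] [set: E] < ncomp (~: [set v]) (avoid v).

Definition ec_ok (k : nat) : Prop :=
  k < #|E| /\
  forall D : {set E}, #|D| < k -> connected_on [set: V] (~: D).

Definition edge_connectivity_is (k : nat) : Prop :=
  ec_ok k /\ forall k', ec_ok k' -> k' <= k.

Definition degree (v : V) : nat := #|[set e | (src e == v) || (dst e == v)]|.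

End MultiGraph.

(* Main.v *)
Require Import Defs.
From mathcomp Require Import all_boot zify.
From Stdlib Require Import Classical.
Set Implicit Arguments. Unset Strict Implicit. Unset Printing Implicit Defensive.

Section H.
Variables (V E : finType) (src dst : E -> V).
Hypothesis loopless : forall e, src e != dst e.

Lemma connect_map (r r' : rel V) (f : V -> V) :
  (forall a b, r a b -> f a = f b \/ r' (f a) (f b)) ->
  forall x y, connect r x y -> connect r' (f x) (f y).
Proof.
move=> H x y /connectP [p]; elim: p x => [|z p IH] x /=.
  by move=> _ ->.
case/andP=> rxz pz ey; apply: connect_trans (IH z pz ey).
by case: (H _ _ rxz) => [->|h]; [exact: connect0 | exact: connect1].
Qed.

Lemma connect_cross (r : rel V) (S : {set V}) x y :
  connect r x y -> x \in S -> y \notin S ->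
  exists a b, [/\ r a b, a \in S & b \notin S].
Proof.
move=> /connectP [p]; elim: p x => [|z p IH] x /=.
  by move=> _ -> ->.
case/andP=> rxz pz ey xS yS.
case zS: (z \in S); first exact: IH pz ey zS yS.
by exists x, z; rewrite zS.
Qed.

Lemma conn_sub (F F' : {set E}) x y : F \subset F' ->
  conn src dst F x y -> conn src dst F' x y.
Proof.
move=> sFF'; apply: (connect_map (f := id)) => a b /existsP [e /andP [eF j]].
by right; apply/existsP; exists e; rewrite (subsetP sFF' _ eF).
Qed.

Lemma conn0 x y : conn src dst set0 x y -> x = y.
Proof.
move=> /connectP [[|z p]] /=; first by move=> _ ->.
by case/andP=> /existsP [e]; rewrite inE.
Qed.

Lemma joinsC e x y : joins src dst e x y = joins src dst e y x.
Proof. by rewrite /joins orbC. Qed.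

Lemma adj_sym F : symmetric (adj src dst F).
Proof.
move=> x y; apply/existsP/existsP => [] [e /andP [eF j]]; exists e;
by rewrite eF joinsC.
Qed.

Lemma conn_sym F x y : conn src dst F x y = conn src dst F y x.
Proof. exact: (sym_connect_sym (adj_sym F)). Qed.

Definition within (S : {set V}) := [set e | (src e \in S) && (dst e \in S)].
Definition crossing (S : {set V}) e := (src e \in S) != (dst e \in S).

Definition good_cut (S : {set V}) (T : {set E}) := exists c, forall e, e \in T ->
  ((src e \in S) && (dst e \notin S) -> src e = c) /\
  ((dst e \in S) && (src e \notin S) -> dst e = c).

Lemma restrict_tree T S : spanning_tree src dst setT setT T -> good_cut S T ->
  spanning_tree src dst S (within S) (T :&: within S).
Proof.
case=> _ [hc ha] [c hcut]; split; first exact: subsetIr.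
split.
  move=> x y xS yS.
  have := connect_map (f := fun u => if u \in S then u else c) _ (hc x y (in_setT _) (in_setT _)).
  rewrite xS yS; apply.
  move=> a b /existsP [e /andP [eT j]].
  have [h1 h2] := hcut e eT.
  case aS: (a \in S); case bS: (b \in S).
  - right; apply/existsP; exists e; rewrite !inE eT j andbT /=.
    by case/orP: j => /andP [/eqP-> /eqP->]; rewrite aS bS.
  - left; case/orP: j => /andP [/eqP ea /eqP eb]; subst a b.
      by apply: h1; rewrite aS bS.
    by apply: h2; rewrite aS bS.
  - left; case/orP: j => /andP [/eqP ea /eqP eb]; subst a b.
      by symmetry; apply: h2; rewrite aS bS.
    by symmetry; apply: h1; rewrite aS bS.
  - by left.
move=> e /setIP [eT eW]; apply/negP => hcon; apply: (negP (ha e eT)).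
by apply: conn_sub hcon; apply: setSD; apply: subsetIl.
Qed.


Lemma cut_composite T1 T2 (S : {set V}) :
  bispanningG src dst ->
  spanning_tree src dst setT setT T1 -> spanning_tree src dst setT setT T2 ->
  T1 :&: T2 = set0 -> T1 :|: T2 = setT ->
  1 < #|S| -> S != setT -> good_cut S T1 -> good_cut S T2 ->
  composite src dst.
Proof.
move=> hG h1 h2 h12 hU hS hST g1 g2; split => //.
exists S, (within S); split.
- by move=> e; rewrite inE.
- exists (T1 :&: within S), (T2 :&: within S); split.
  + exact: restrict_tree.
  + exact: restrict_tree.
  + by rewrite setIACA h12 set0I.
  + by rewrite -setIUl hU setTI.
- by case=> eS _; rewrite eS eqxx in hST.
- exact: hS.
Qed.

Lemma tree_cross T (S : {set V}) x y : connected_on src dst setT T ->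
  x \in S -> y \notin S -> exists e, (e \in T) && crossing S e.
Proof.
move=> hc xS yS.
have [a [b [/existsP [e /andP [eT j]] aS bS]]] :=
  connect_cross (hc x y (in_setT _) (in_setT _)) xS yS.
exists e; rewrite eT /crossing.
by case/orP: j => /andP [/eqP-> /eqP->]; rewrite aS (negbTE bS).
Qed.

Lemma cut2 T1 T2 (S : {set V}) (I : {set E}) x y :
  connected_on src dst setT T1 -> connected_on src dst setT T2 ->
  T1 :&: T2 = set0 -> #|I| <= 2 ->
  (forall e, crossing S e -> e \in I) -> x \in S -> y \notin S ->
  good_cut S T1 /\ good_cut S T2.
Proof.
move=> c1 c2 h12 hI hcr xS yS.
have [e1 /andP [e1T e1c]] := tree_cross c1 xS yS.
have [e2 /andP [e2T e2c]] := tree_cross c2 xS yS.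
have n1 : 0 < #|T1 :&: I| by apply/card_gt0P; exists e1; rewrite inE e1T hcr.
have n2 : 0 < #|T2 :&: I| by apply/card_gt0P; exists e2; rewrite inE e2T hcr.
have hU : #|(T1 :&: I) :|: (T2 :&: I)| = #|T1 :&: I| + #|T2 :&: I|.
  by rewrite cardsU setIACA h12 set0I cards0 subn0.
have hle : #|(T1 :&: I) :|: (T2 :&: I)| <= #|I|.
  by apply: subset_leq_card; rewrite -setIUl subsetIr.
have gc : forall T, #|T :&: I| == 1 -> good_cut S T.
  move=> T /cards1P [a ha].
  have ea : forall e, e \in T -> crossing S e -> e = a.
    by move=> e eT ec; apply/set1P; rewrite -ha inE eT hcr.
  exists (if src a \in S then src a else dst a) => e eT; split.
  - case/andP=> sS dS; have ec : crossing S e by rewrite /crossing sS (negbTE dS).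
    by rewrite -(ea e eT ec) sS.
  - case/andP=> dS sS; have ec : crossing S e by rewrite /crossing dS (negbTE sS).
    by rewrite -(ea e eT ec) (negbTE sS).
split; apply: gc; apply/eqP; lia.
Qed.


Lemma single_tree e (S : {set V}) (F : {set E}) : e \in F ->
  S = [set src e; dst e] -> spanning_tree src dst S F [set e].
Proof.
move=> eF ->; split; first by rewrite sub1set.
have ad : adj src dst [set e] (src e) (dst e).
  by apply/existsP; exists e; rewrite inE eqxx /joins !eqxx.
split.
  move=> x y /set2P [] -> /set2P [] ->; rewrite /conn ?connect0 //.
    exact: connect1.
  by rewrite adj_sym in ad; exact: connect1.
move=> f /set1P ->; rewrite setDv; apply/negP => /conn0 h.
by have := loopless e; rewrite h eqxx.
Qed.

Lemma part1 : bispanningG src dst -> 3 <= #|V| ->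
  has_parallel_edges src dst -> composite src dst.
Proof.
move=> hG hV [e1 [e2 [ne j]]]; split => //.
exists [set src e1; dst e1], [set e1; e2]; split.
- move=> e /set2P [] ->; first by rewrite !inE !eqxx orbT.
  by case/orP: j => /andP [/eqP-> /eqP->]; rewrite !inE !eqxx ?orbT.
- exists [set e1], [set e2]; split.
  + by apply: single_tree; rewrite // !inE eqxx.
  + apply: single_tree; first by rewrite !inE eqxx orbT.
    by case/orP: j => /andP [/eqP-> /eqP->] //; rewrite setUC.
  + apply/setP => e; rewrite !inE; apply/negP => /andP [/eqP-> /eqP h].
    by rewrite h eqxx in ne.
  + by [].
- case=> h _; have := cardsT V; rewrite -h cards2; lia.
- by rewrite cards2 loopless.
Qed.


Lemma part3 : bispanningG src dst -> 3 <= #|V| ->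
  (exists v, cut_vertex src dst v) -> composite src dst.
Proof.
move=> hG hV [v hcut].
have [T1 [T2 [h1 h2 h12 hU]]] := hG.
have [x0 _] : exists x0 : V, x0 \in [set: V].
  by apply/card_gt0P; rewrite cardsT; lia.
have n0 : 0 < ncomp src dst setT setT.
  apply/card_gt0P; exists [set y in [set: V] | conn src dst setT x0 y].
  by apply: imset_f.
have /card_gt1P [K1 [K2 [/imsetP [x1 x1S ->] /imsetP [x2 x2S ->] neK]]] :
  1 < ncomp src dst (~: [set v]) (avoid src dst v) by rewrite /cut_vertex in hcut; lia.
set C := [set y | (y != v) && conn src dst (avoid src dst v) x1 y].
set S := v |: C.
have x1v : x1 != v by move: x1S; rewrite !inE.
have x1C : x1 \in C by rewrite inE x1v /conn connect0.
have aj : forall e a b, joins src dst e a b -> a \in S -> b \notin S -> a = v.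
  move=> e a b j aS bS.
  have bv : b != v by apply: contraNneq bS => ->; rewrite setU11.
  case: (eqVneq a v) => [//|av].
  have aC : a \in C by move: aS; rewrite inE => /orP [/set1P h|//]; rewrite h eqxx in av.
  have eA : e \in avoid src dst v.
    rewrite inE; by case/orP: j => /andP [/eqP-> /eqP->]; rewrite av bv.
  case/negP: bS; rewrite inE; apply/orP; right; rewrite inE bv /=.
  move: aC; rewrite inE => /andP [_ ca]; apply: connect_trans ca _.
  by apply: connect1; apply/existsP; exists e; rewrite eA j.
have gc : forall T, good_cut S T.
  move=> T; exists v => e _; split => /andP [h1' h2'].
    by apply: (aj e) h1' h2'; rewrite /joins !eqxx.
  by apply: (aj e) h1' h2'; rewrite /joins !eqxx orbT.
apply: (cut_composite hG h1 h2 h12 hU _ _ (gc T1) (gc T2)).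
  apply/card_gt1P; exists v, x1; rewrite setU11 inE x1C orbT eq_sym x1v; done.
apply/negP => /eqP hS; case/eqP: neK; apply/setP => y; rewrite !inE.
case: (eqVneq y v) => //= yv.
have yC : y \in C.
  have := in_setT y; rewrite -hS inE => /orP [/set1P h|//]; by rewrite h eqxx in yv.
have x2C : x2 \in C.
  have := in_setT x2; rewrite -hS inE => /orP [/set1P e2|//].
  by move: x2S; rewrite e2 !inE eqxx.
move: yC x2C; rewrite !inE => /andP [_ c1y] /andP [_ c12].
rewrite c1y; apply/esym; apply: connect_trans c1y.
by rewrite -/(conn _ _ _ _ _) conn_sym.
Qed.


Lemma part5 : bispanningG src dst -> 3 <= #|V| ->
  (exists v, degree src dst v = 2) -> composite src dst.
Proof.
move=> hG hV [v hd].
have [T1 [T2 [h1 h2 h12 hU]]] := hG.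
have hcS : 1 < #|[set~ v]| by rewrite cardsC1; lia.
have [x xS] : exists x, x \in [set~ v] by apply/card_gt0P; lia.
have vS : v \notin [set~ v] by rewrite !inE eqxx.
have hcr : forall e, crossing [set~ v] e -> e \in [set e | (src e == v) || (dst e == v)].
  move=> e; rewrite /crossing !inE.
  by case: (src e == v); case: (dst e == v).
have [g1 g2] := cut2 h1.2.1 h2.2.1 h12 (eq_leq hd) hcr xS vS.
apply: (cut_composite hG h1 h2 h12 hU hcS) g1 g2.
by apply/negP => /eqP h; move: vS; rewrite h inE.
Qed.

Lemma tree_big T : connected_on src dst setT T -> 3 <= #|V| -> 1 < #|T|.
Proof.
move=> hc hV.
have [x [y [_ _ xy]]] : exists x y, [/\ x \in [set: V], y \in [set: V] & x != y].
  by apply/card_gt1P; rewrite cardsT; lia.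
have yn : y \notin [set x] by rewrite inE eq_sym.
have [e /andP [eT ec]] := tree_cross hc (set11 x) yn.
have [z zn] : exists z, z \in ~: [set src e; dst e].
  apply/card_gt0P; have := cardsC [set src e; dst e]; rewrite cards2; lia.
have zs : z != src e by move: zn; rewrite !inE negb_or => /andP [].
have sn : src e \notin [set z] by rewrite inE eq_sym.
have [e' /andP [eT' ec']] := tree_cross hc (set11 z) sn.
apply/card_gt1P; exists e, e'; rewrite eT eT'; split => //.
apply/negP => /eqP h; subst e'; move: ec' zn; rewrite /crossing !inE.
by rewrite ![z == _]eq_sym; case: (src e == z); case: (dst e == z).
Qed.


Lemma part4 : bispanningG src dst -> 3 <= #|V| ->
  edge_connectivity_is src dst 2 -> composite src dst.
Proof.
move=> hG hV [_ hmax].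
have [T1 [T2 [h1 h2 h12 hU]]] := hG.
have hE : 3 < #|E|.
  have := tree_big h1.2.1 hV; have := tree_big h2.2.1 hV.
  have := cardsU T1 T2; rewrite h12 hU cards0 cardsT; lia.
have nall : ~ (forall D : {set E}, #|D| < 3 -> connected_on src dst setT (~: D)).
  by move=> H; have := hmax 3 (conj hE H).
have [D hD] := not_all_ex_not _ _ nall.
have [hD3 nc] := imply_to_and _ _ hD.
have [x hx] := not_all_ex_not _ _ nc.
have [y hy] := not_all_ex_not _ _ hx.
have [_ hy'] := imply_to_and _ _ hy.
have [_ nxy] := imply_to_and _ _ hy'.
set C := [set z | conn src dst (~: D) x z].
have xC : x \in C by rewrite inE /conn connect0.
have yC : y \notin C by rewrite inE; apply/negP.
have hcrC : forall e, crossing C e -> e \in D.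
  move=> e; apply: contraTT => eD; rewrite /crossing negbK !inE.
  have ad : adj src dst (~: D) (src e) (dst e).
    by apply/existsP; exists e; rewrite inE eD /joins !eqxx.
  apply/eqP; apply/idP/idP => h.
    by apply: connect_trans h (connect1 ad).
  by apply: connect_trans h (connect1 _); rewrite adj_sym.
have hD2 : #|D| <= 2 by lia.
case: (ltnP 1 #|C|) => hC.
  have [g1 g2] := cut2 h1.2.1 h2.2.1 h12 hD2 hcrC xC yC.
  apply: (cut_composite hG h1 h2 h12 hU hC) g1 g2.
  by apply/negP => /eqP h; move: yC; rewrite h inE.
have hcr' : forall e, crossing (~: C) e -> e \in D.
  by move=> e; rewrite /crossing !in_setC => h; apply: hcrC; rewrite /crossing; move: h; case: (src e \in C); case: (dst e \in C).
have yC' : y \in ~: C by rewrite inE.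
have xC' : x \notin ~: C by rewrite inE negbK.
have [g1 g2] := cut2 h1.2.1 h2.2.1 h12 hD2 hcr' yC' xC'.
apply: (cut_composite hG h1 h2 h12 hU _) g1 g2.
  have := cardsC C; lia.
by apply/negP => /eqP h; move: xC'; rewrite h inE.
Qed.

End H.
Theorem mainTheorem8 (V E : finType) (src dst : E -> V)
  (loopless : forall e, src e != dst e)
  (hG : bispanningG src dst) (hV : 3 <= #|V|) :
  [/\ has_parallel_edges src dst -> composite src dst,
      atomic src dst -> simple src dst,
      (exists v, cut_vertex src dst v) -> composite src dst,
      edge_connectivity_is src dst 2 -> composite src dst &
      (exists v, degree src dst v = 2) -> composite src dst].
Proof.
split.
- exact: part1 loopless hG hV.
- by move=> [_ na] hp; apply: na; exact: part1 loopless hG hV hp.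
- exact: part3 hG hV.
- exact: part4 hG hV.
- exact: part5 hG hV.
Qed.
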